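(* Let $f\in\mathcal{R}$ be a real rational function all of whose poles are roots of unity, and let $L$ be the level of $f$. Then $f$ is a finite real linear combination of the functions \[\Big(x\frac{d}{dx}\Big)^k\Big(\frac{x^j}{1-x^L}\Big),\qquad k\in\mathbb{N}=\{0,1,2,\dots\},\ 0\le j<L,\] and each of these functions is an eigenfunction of $U_{L+1}$ and has level $L$.
   Context: $\mathcal{R}$ denotes the real vector space of rational functions $f(x)=A(x)/B(x)$ with $A,B\in\mathbb{R}[x]$, $B(0)\neq 0$ and $\deg A<\deg B$. For a rational function $f$ with Taylor expansion $f(x)=\sum_{n\ge0}a_nx^n$ at $0$ and a positive integer $p$, $U_pf(x)=\sum_{n\ge 0}a_{pn}x^n$. If all poles of $f$ are roots of unity, the level of $f$ is the least common multiple of the orders of these roots of unity. *)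

(* Defs.v *)
From HB Require Import structures.
From mathcomp Require Import all_boot all_order all_algebra.
From mathcomp Require Import complex.
Set Implicit Arguments. Unset Strict Implicit. Unset Printing Implicit Defensive.
Import Order.TTheory GRing.Theory Num.Theory.
Local Open Scope ring_scope.

(* A rational function A/B is represented by the pair of polynomials (A, B).
   The ambient field of real numbers is an arbitrary real closed field R,
   and its complex numbers are R[i]. *)

Section RatFun.
Variable R : rcfType.

Definition ratf (A B : {poly R}) : {fraction {poly R}} :=
  FracField.tofrac A / FracField.tofrac B.

Definition ratc (c : R) : {fraction {poly R}} := FracField.tofrac c%:P.

(* Taylor coefficients at 0 of A/B (B(0) <> 0): the unique sequence (a_n)
   with  sum_{i<=n} B_i a_{n-i} = A_n  for all n (formal power series
   quotient A/B).  tcoefs A B n lists a_0, ..., a_n. *)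
Fixpoint tcoefs (A B : {poly R}) (n : nat) : seq R :=
  match n with
  | 0 => [:: A`_0 / B`_0]
  | n'.+1 => let s := tcoefs A B n' in
      rcons s ((A`_n - \sum_(1 <= i < n.+1) B`_i * nth 0 s (n - i)) / B`_0)
  end.

Definition taylor (A B : {poly R}) (n : nat) : R := nth 0 (tcoefs A B n) n.

(* A/B is an eigenfunction of U_p: U_p(A/B) = lam * (A/B) with A/B <> 0,
   U_p acting on Taylor coefficients by a_n |-> a_{pn}. *)
Definition Up_eigenfunction (p : nat) (A B : {poly R}) : Prop :=
  ratf A B != 0 /\
  exists lam : R, forall n : nat, taylor A B (p * n) = lam * taylor A B n.

Definition cpoly (P : {poly R}) : {poly R[i]} := map_poly (fun x => x%:C)%C P.

Definition is_pole (A B : {poly R}) (z : R[i]) : Prop :=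
  root (cpoly (B %/ gcdp A B)) z.

(* L is the level of A/B: all poles are roots of unity, and L is the least
   common multiple of their orders (stated by the universal property of the
   lcm; the order of z is the n with n.-primitive_root z). *)
Definition is_level (A B : {poly R}) (L : nat) : Prop :=
  (forall z, is_pole A B z -> exists n, n.-primitive_root z /\ (n %| L)%N) /\
  (forall m : nat,
     (forall z, is_pole A B z -> exists n, n.-primitive_root z /\ (n %| m)%N) ->
     (L %| m)%N).

(* theta = x d/dx on rational functions:
   theta (A/B) = x (A' B - A B') / B^2. *)
Definition theta (AB : {poly R} * {poly R}) : {poly R} * {poly R} :=
  ('X * (AB.1^`() * AB.2 - AB.1 * AB.2^`()), AB.2 ^+ 2).

Definition gfun (L k j : nat) : {poly R} * {poly R} :=
  iter k theta ('X^j, 1 - 'X^L).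

End RatFun.

(* Main.v *)
Require Import Defs.
From HB Require Import structures.
From mathcomp Require Import all_boot all_order all_algebra.
From mathcomp Require Import complex.
From mathcomp Require Import ring zify.
From mathcomp Require cyclic separable cyclotomic.
Set Implicit Arguments. Unset Strict Implicit. Unset Printing Implicit Defensive.
Import Order.TTheory GRing.Theory Num.Theory.
Local Open Scope ring_scope.

Section Series.
Variable R : rcfType.
Implicit Types A B P Q : {poly R}.

Lemma size_tcoefs A B n : size (tcoefs A B n) = n.+1.
Proof. by elim: n => //= n IH; rewrite size_rcons IH. Qed.

Lemma nth_tcoefs A B n i : (i <= n)%N -> nth 0 (tcoefs A B n) i = taylor A B i.
Proof.
elim: n => [|n IH]; first by rewrite leqn0 => /eqP ->.
rewrite leq_eqVlt => /orP [/eqP -> //| Hi].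
by rewrite /= nth_rcons size_tcoefs Hi IH.
Qed.

Definition srel A B (a : nat -> R) :=
  forall n, A`_n = \sum_(i < n.+1) B`_i * a (n - i)%N.

Lemma taylorS A B n : taylor A B n.+1 =
  (A`_n.+1 - \sum_(i < n.+1) B`_(bump 0 i) * taylor A B (n.+1 - bump 0 i)) / B`_0.
Proof.
rewrite /taylor /= nth_rcons size_tcoefs ltnn eqxx; congr ((_ - _) / _).
rewrite big_add1 /= big_mkord; apply: eq_bigr => i _.
by rewrite /bump /= add1n subSS nth_tcoefs // leq_subr.
Qed.

Lemma taylor_srel A B : B`_0 != 0 -> srel A B (taylor A B).
Proof.
move=> B0 [|n].
  by rewrite big_ord1 /taylor /= mulrC divfK.
by rewrite big_ord_recl subn0 taylorS mulrC divfK // subrK.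
Qed.

Lemma srel_uniq A B a b : B`_0 != 0 -> srel A B a -> srel A B b -> forall n, a n = b n.
Proof.
move=> B0 Ha Hb n; elim: n {-2}n (leqnn n) => [|n IH] m.
  rewrite leqn0 => /eqP ->; have := Ha 0%N; rewrite Hb !big_ord1 subn0.
  by move/mulfI => /(_ B0).
rewrite leq_eqVlt => /orP [/eqP ->|]; last by apply: IH.
have := Ha n.+1; rewrite Hb [X in X = _]big_ord_recl [X in _ = X]big_ord_recl !subn0 => E.
apply: (mulfI B0); apply: (addIr (\sum_(i < n.+1) B`_(bump 0 i) * a (n.+1 - bump 0 i)%N)).
rewrite {2}(eq_bigr (fun i : 'I_n.+1 => B`_(bump 0 i) * b (n.+1 - bump 0 i)%N)).
  by symmetry; exact: E.
move=> i _; rewrite /bump /= add1n subSS IH // leq_subr //.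
Qed.

Definition T n (a : nat -> R) : {poly R} := \poly_(i < n.+1) a i.
Definition low n P := forall i, (i <= n)%N -> P`_i = 0.

Lemma lowD n P Q : low n P -> low n Q -> low n (P + Q).
Proof. by move=> HP HQ i Hi; rewrite coefD HP ?HQ ?addr0. Qed.
Lemma lowN n P : low n P -> low n (- P).
Proof. by move=> HP i Hi; rewrite coefN HP ?oppr0. Qed.
Lemma lowM n P Q : low n P -> low n (Q * P).
Proof.
move=> HP i Hi; rewrite coefM big1 // => j _; rewrite HP ?mulr0 //.
by rewrite (leq_trans (leq_subr _ _) Hi).
Qed.
Lemma coefXder P i : ('X * P^`())`_i = i%:R * P`_i.
Proof.
case: i => [|i]; first by rewrite coefXM eqxx mul0r.
by rewrite coefXM /= coef_deriv mulr_natl.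
Qed.
Lemma lowXder n P : low n P -> low n ('X * P^`()).
Proof. by move=> HP i Hi; rewrite coefXder HP ?mulr0. Qed.

Lemma srel_low A B a : srel A B a -> forall n, low n (B * T n a - A).
Proof.
move=> H n i Hi; rewrite coefB H coefM; apply/eqP; rewrite subr_eq0; apply/eqP/eq_bigr => j _.
by rewrite coef_poly ltnS (leq_trans (leq_subr _ _) Hi).
Qed.

Lemma low_srel A B a : (forall n, low n (B * T n a - A)) -> srel A B a.
Proof.
move=> H n; have /eqP := H n n (leqnn n); rewrite coefB coefM subr_eq0 => /eqP <-.
apply: eq_bigr => j _.
by rewrite coef_poly ltnS leq_subr.
Qed.

Lemma XderT n a : 'X * (T n a)^`() = T n (fun i => i%:R * a i).
Proof.
apply/polyP => i; rewrite coefXder !coef_poly; case: ifP => //; by rewrite mulr0.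
Qed.

Lemma srel_theta A B a : srel A B a ->
  srel (theta (A, B)).1 (theta (A, B)).2 (fun i => i%:R * a i).
Proof.
move=> H; apply: low_srel => n /=.
have L1 : low n (B * T n a - A) by move=> i Hi; apply: (srel_low H).
move: L1.
set t := T n a.
have E : B ^+ 2 * T n (fun i => i%:R * a i) - 'X * (A^`() * B - A * B^`())
   = B * ('X * (B * t - A)^`()) - ('X * B^`()) * (B * t - A).
  rewrite -XderT derivB derivM; ring.
move=> L1; rewrite E; apply: lowD; first by apply: lowM; apply: lowXder.
by apply: lowN; apply: lowM.
Qed.

Lemma srel_ext A B a b : (forall n, a n = b n) -> srel A B a -> srel A B b.
Proof. by move=> E H n; rewrite H; apply: eq_bigr => i _; rewrite E. Qed.

End Series.
Section Gfun.
Variable R : rcfType.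
Implicit Types A B P Q N : {poly R}.
Variables (L j : nat).
Hypothesis L0 : (0 < L)%N.
Hypothesis jL : (j < L)%N.

Definition DD : {poly R} := 1 - 'X^L.

Lemma gfun2 k : (gfun R L k j).2 = DD ^+ (2 ^ k).
Proof.
elim: k => [|k IH]; first by rewrite expr1.
by rewrite /gfun iterS -/(gfun R L k j) /= IH -exprM expnSr.
Qed.

Lemma gfun1S k : (gfun R L k.+1 j) = theta (gfun R L k j).
Proof. by rewrite /gfun iterS. Qed.

Lemma DD0 : DD`_0 = 1.
Proof. by rewrite coefB coef1 coefXn eqxx -(prednK L0) /= subr0. Qed.

Lemma DD_neq0 : DD != 0.
Proof. by apply/eqP => E; have := DD0; rewrite E coef0 => /eqP; rewrite eq_sym oner_eq0. Qed.

Lemma gfun20 k : (gfun R L k j).2`_0 = 1.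
Proof. by rewrite gfun2 -horner_coef0 horner_exp horner_coef0 DD0 expr1n. Qed.

Lemma sumT B (a : nat -> R) n : \sum_(i < n.+1) B`_i * a (n - i)%N = (B * T n a)`_n.
Proof. by rewrite coefM; apply: eq_bigr => i _; rewrite coef_poly ltnS leq_subr. Qed.

Definition aj (n : nat) : R := ((n %% L)%N == j)%:R.

Lemma srel_base : srel 'X^j DD aj.
Proof.
move=> n; rewrite sumT mulrBl mul1r coefB coefXnM coef_poly ltnSn coefXn.
case: ltnP => H.
  by rewrite subr0 /aj modn_small.
rewrite coef_poly ltnS leq_subr /aj.
have -> : (n %% L)%N = ((n - L) %% L)%N by rewrite -{1}(subnK H) modnDr.
rewrite subrr; case: eqP => // E; move: H; rewrite E leqNgt jL //.
Qed.

Lemma srel_gfun k : srel (gfun R L k j).1 (gfun R L k j).2 (fun n => n%:R ^+ k * aj n).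
Proof.
elim: k => [|k IH].
  by apply: (srel_ext _ srel_base) => n; rewrite expr0 mul1r.
rewrite gfun1S; have := srel_theta IH; rewrite -surjective_pairing.
by apply: srel_ext => n; rewrite exprS mulrA.
Qed.

Lemma taylor_gfun k n : taylor (gfun R L k j).1 (gfun R L k j).2 n = n%:R ^+ k * aj n.
Proof.
have H0 : (gfun R L k j).2`_0 != 0 by rewrite gfun20 oner_eq0.
exact: (srel_uniq H0 (taylor_srel _ H0) (srel_gfun k)).
Qed.

Lemma gfun1_neq0 k : (gfun R L k j).1 != 0.
Proof.
apply/eqP => E.
have S0 : srel (gfun R L k j).1 (gfun R L k j).2 (fun _ => 0).
  by move=> n; rewrite E coef0 big1 // => i _; rewrite mulr0.
have H0 : (gfun R L k j).2`_0 != 0 by rewrite gfun20 oner_eq0.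
have E2 := srel_uniq H0 S0 (srel_gfun k) (j + L)%N.
move: E2; rewrite /aj modnDr modn_small // eqxx mulr1 => /esym/eqP.
rewrite expf_eq0 pnatr_eq0 addn_eq0 (negbTE (lt0n_neq0 L0)) !andbF; by case.
Qed.

Lemma eigen_gfun k : Up_eigenfunction L.+1 (gfun R L k j).1 (gfun R L k j).2.
Proof.
split.
  rewrite /ratf mulf_eq0 negb_or tofrac_eq0 gfun1_neq0 /= invr_eq0 tofrac_eq0.
  by apply/eqP => E; have := gfun20 k; rewrite E coef0 => /eqP; rewrite eq_sym oner_eq0.
exists ((L.+1)%:R ^+ k) => n; rewrite !taylor_gfun natrM exprMn mulrA; congr (_ * _).
by rewrite /aj mulSn addnC mulnC modnMDl.
Qed.

End Gfun.
Section Np.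
Variable R : rcfType.
Implicit Types A B P Q N : {poly R}.

Lemma theta_feq P Q P2 Q2 : P * Q2 = P2 * Q ->
  (theta (P, Q)).1 * Q2 ^+ 2 = (theta (P2, Q2)).1 * Q ^+ 2.
Proof.
move=> h; have h2 : (P * Q2)^`() = (P2 * Q)^`() by rewrite h.
rewrite !derivM in h2.
apply/eqP; rewrite -subr_eq0 /=; apply/eqP.
have -> : 'X * (P^`() * Q - P * Q^`()) * Q2 ^+ 2 - 'X * (P2^`() * Q2 - P2 * Q2^`()) * Q ^+ 2
  = 'X * (Q * Q2 * ((P^`() * Q2 + P * Q2^`()) - (P2^`() * Q + P2 * Q^`()))
          - (Q^`() * Q2 + Q * Q2^`()) * (P * Q2 - P2 * Q)) by ring.
by rewrite h2 h !subrr !(mulr0, mul0r, subrr).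
Qed.

Variables (L j : nat).
Hypothesis L0 : (0 < L)%N.
Hypothesis jL : (j < L)%N.

Fixpoint Np k : {poly R} :=
  if k is k'.+1 then 'X * ((Np k')^`() * DD R L + (Np k' * 'X^(L.-1)) *+ (k'.+1 * L))
  else 'X^j.

Lemma XXL : 'X * 'X^(L.-1) = 1 - DD R L :> {poly R}.
Proof. by rewrite -exprS prednK // /DD opprB addrC subrK. Qed.

Lemma derivDD : (DD R L)^`() = - ('X^(L.-1) *+ L).
Proof. by rewrite /DD derivB derivXn -derivn1 derivnC /= sub0r. Qed.

Lemma theta_N k : (theta (Np k, DD R L ^+ k.+1)).1 * DD R L ^+ k.+2
   = Np k.+1 * (DD R L ^+ k.+1) ^+ 2.
Proof.
rewrite /= deriv_exp derivDD /=.
set D := DD R L; set N := Np k.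
rewrite !exprS; rewrite -!mulrnAl; ring.
Qed.

Lemma Np_feq k : (gfun R L k j).1 * DD R L ^+ k.+1 = Np k * (gfun R L k j).2.
Proof.
elim: k => [|k IH]; first by rewrite /= !expr1.
rewrite gfun1S.
have T1 := theta_feq IH.
have T2 := theta_N k.
have nz : (DD R L ^+ k.+1) ^+ 2 != 0 by rewrite !expf_neq0 // DD_neq0.
rewrite -surjective_pairing in T1.
apply: (mulIf nz).
set G := gfun R L k j in T1 *.
change (theta G).2 with (G.2 ^+ 2).
have -> : (theta G).1 * DD R L ^+ k.+2 * (DD R L ^+ k.+1) ^+ 2
  = ((theta G).1 * (DD R L ^+ k.+1) ^+ 2) * DD R L ^+ k.+2 by ring.
rewrite T1 mulrAC T2; ring.
Qed.

End Np.
Section Np2.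
Variable R : rcfType.
Implicit Types A B P Q N : {poly R}.

Lemma size_MnLeq P n : (size (P *+ n) <= size P)%N.
Proof.
elim: n => [|n IH]; first by rewrite mulr0n size_poly0.
by rewrite mulrS (leq_trans (size_polyD _ _)) // geq_max leqnn IH.
Qed.

Lemma size_derivle P : (size P^`() <= (size P).-1)%N.
Proof.
have [->|nz] := eqVneq P 0; first by rewrite deriv0 size_poly0.
by have := lt_size_deriv nz; case: (size P) => //.
Qed.

Variables (L j : nat).
Hypothesis L0 : (0 < L)%N.
Hypothesis jL : (j < L)%N.

Lemma size_DD : size (DD R L) = L.+1.
Proof. by rewrite /DD -opprB size_polyN size_XnsubC. Qed.

Lemma Np_size k : (size (Np R L j k) <= k.+1 * L)%N.
Proof.
elim: k => [|k IH] /=; first by rewrite size_polyXn mul1n.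
set N := Np R L j k in IH *.
have h1 := size_derivle N.
have a1 : (size (N^`() * DD R L)%R <= (size N).-1 + L)%N.
  apply: (leq_trans (size_polyMleq _ _)); rewrite size_DD addnS /=; exact: leq_add.
have a2 : (size ((N * 'X^(L.-1)) *+ (k.+1 * L))%R <= (size N + L).-1)%N.
  apply: (leq_trans (size_MnLeq _ _)); apply: (leq_trans (size_polyMleq _ _)).
  by rewrite size_polyXn prednK.
have a3 := size_polyD (N^`() * DD R L) ((N * 'X^(L.-1)) *+ (k.+1 * L)).
apply: (leq_trans (size_polyMleq _ _)); rewrite size_polyX.
have e2 : (2%R : nat) = 2%N by [].
have Lm : (L <= k.+1 * L)%N by rewrite leq_pmull.
rewrite e2 (mulSn k.+1); move: Lm IH a1 a2 a3; move: (k.+1 * L)%N => m.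
rewrite -!subn1; move: (size N) => n.
move: (size (N^`() * DD R L)%R) => s1.
move: (size (N * _ *+ m)) => s2.
move: (size (N^`() * DD R L + _)%R) => s3.
lia.
Qed.

Lemma Np_mod k : exists Q, Np R L j k = (k`! * L ^ k)%:R * 'X^j + DD R L * Q.
Proof.
elim: k => [|k [Q EN]]; first by exists 0; rewrite /= mulr0 addr0 mul1r.
exists ('X * (Np R L j k)^`() - (Np R L j k) *+ (k.+1 * L) + Q *+ (k.+1 * L)).
rewrite /=; set N := Np R L j k in EN *.
have -> : 'X * (N^`() * DD R L + (N * 'X^(L.-1)) *+ (k.+1 * L))
   = DD R L * ('X * N^`()) + ('X * 'X^(L.-1)) * N *+ (k.+1 * L) by ring.
rewrite XXL //.
have -> : (k.+1`! * L ^ k.+1)%N = ((k.+1 * L) * (k`! * L ^ k))%N.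
  by rewrite factS expnS; ring.
rewrite [in LHS]EN [in RHS]EN natrM; ring.
Qed.

End Np2.
Section Poles.
Variable R : rcfType.
Local Notation C := (R[i]).

Lemma prim_root_exists (n : nat) : (n > 0)%N -> exists z : C, n.-primitive_root z.
Proof.
pose p : {poly C} := 'X^n - 1; have [r Dp] := closed_field_poly_normal p.
move=> n_gt0; rewrite (monicP _) ?monicXnsubC // scale1r in Dp.
have rn1: all n.-unity_root r by apply/allP=> z; rewrite -root_prod_XsubC -Dp.
have sz_r: (n < (size r).+1)%N.
  by rewrite -(size_prod_XsubC r id) -Dp size_XnsubC.
have [|z] := hasP (cyclic.has_prim_root n_gt0 rn1 _ sz_r); last by exists z.
by rewrite -separable.separable_prod_XsubC -Dp cyclotomic.separable_Xn_sub_1 // pnatr_eq0 -lt0n.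
Qed.

Definition regular (P Q : {poly C}) (z : C) :=
  exists U V, V.[z] != 0 /\ P * V = U * Q.

Lemma cpolyM (P Q : {poly R}) : cpoly (P * Q) = cpoly P * cpoly Q.
Proof. exact: rmorphM. Qed.

Lemma cpolyD (P Q : {poly R}) : cpoly (P + Q) = cpoly P + cpoly Q.
Proof. exact: rmorphD. Qed.
Lemma cpolyX (P : {poly R}) n : cpoly (P ^+ n) = cpoly P ^+ n.
Proof. exact: rmorphXn. Qed.
Lemma cpolyXn n : cpoly (R := R) 'X^n = 'X^n.
Proof. exact: map_polyXn. Qed.
Lemma cpolyXX : cpoly (R := R) 'X = 'X.
Proof. exact: map_polyX. Qed.
Lemma cpoly_nat n : cpoly (R := R) n%:R = n%:R.
Proof. exact: rmorph_nat. Qed.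

Lemma notpole_regular (A B : {poly R}) z :
  ~ is_pole A B z -> regular (cpoly A) (cpoly B) z.
Proof.
move=> np; set g := gcdp A B.
exists (cpoly (A %/ g)), (cpoly (B %/ g)); split; first by apply/negP.
rewrite -!cpolyM; congr cpoly.
have eA := divpK (dvdp_gcdl A B); have eB := divpK (dvdp_gcdr A B).
move: eA eB; rewrite -/g; set a := A %/ g; set b := B %/ g => eA eB.
rewrite -{1}eA -{1}eB; ring.
Qed.

Lemma regular_feq P Q P2 Q2 z : Q != 0 -> P * Q2 = P2 * Q ->
  regular P Q z -> regular P2 Q2 z.
Proof.
move=> Qnz E [U [V [Vz E2]]]; exists U, V; split => //.
apply: (mulIf Qnz).
by rewrite mulrAC -E mulrAC E2 mulrAC.
Qed.

Lemma cpoly_eq0 (P : {poly R}) : (cpoly P == 0) = (P == 0).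
Proof. exact: map_poly_eq0. Qed.

Variables (L j : nat).
Hypothesis L0 : (0 < L)%N.
Hypothesis jL : (j < L)%N.

Lemma cpolyDD : cpoly (DD R L) = 1 - 'X^L.
Proof. by rewrite /cpoly /DD rmorphB rmorph1 /= map_polyXn. Qed.

Lemma gfun_pole k (z : C) : z ^+ L = 1 -> is_pole (gfun R L k j).1 (gfun R L k j).2 z.
Proof.
move=> zL; case: (boolP (root (cpoly ((gfun R L k j).2 %/ gcdp (gfun R L k j).1 (gfun R L k j).2)) z)) => // nr.
exfalso.
have := notpole_regular (A := (gfun R L k j).1) (B := (gfun R L k j).2) (z := z).
case/(_ (fun h => (negP nr) h)) => U [V [Vz E]].
have Hf := Np_feq R j L0 k.
have Hf' : cpoly (gfun R L k j).1 * cpoly (DD R L ^+ k.+1)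
         = cpoly (Np R L j k) * cpoly (gfun R L k j).2 by rewrite -!cpolyM Hf.
have nz : cpoly (gfun R L k j).2 != 0.
  rewrite cpoly_eq0; apply/eqP => e; have := gfun20 R j L0 k; rewrite e coef0.
  by move/eqP; rewrite eq_sym oner_eq0.
have [U2 [V2 [V2z E2]]] := regular_feq nz Hf' (ex_intro _ U (ex_intro _ V (conj Vz E))).
have [Q EQ] := Np_mod R j L0 k.
have := congr1 (fun p => p.[z]) E2 => /=.
rewrite EQ cpolyD !cpolyM !cpolyX cpoly_nat cpolyXX cpolyDD !hornerE zL subrr.
rewrite !(mul0r, mulr0, expr0n, addr0) /= -polyC_natr hornerC.
move/eqP; rewrite !mulf_eq0 (negbTE V2z) orbF pnatr_eq0 muln_eq0 expn_eq0.
rewrite (negbTE (lt0n_neq0 L0)) /= -[_ == 0%N]negbK -lt0n fact_gt0 /=.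
rewrite expf_eq0 => /andP [_ /eqP z0].
by move: zL; rewrite z0 expr0n (negbTE (lt0n_neq0 L0)) => /eqP; rewrite eq_sym oner_eq0.
Qed.

End Poles.
Section Level.
Variable R : rcfType.
Local Notation C := (R[i]).

Lemma pole_root (A B : {poly R}) z : is_pole A B z -> root (cpoly B) z.
Proof.
rewrite /is_pole => H; apply: root_dvdp H.
by rewrite /cpoly dvdp_map divp_dvd // dvdp_gcdr.
Qed.

Variables (L j : nat).
Hypothesis L0 : (0 < L)%N.
Hypothesis jL : (j < L)%N.

Lemma gfun_level k : is_level (gfun R L k j).1 (gfun R L k j).2 L.
Proof.
split.
  move=> z /pole_root; rewrite gfun2 cpolyX cpolyDD rootE !hornerE expf_eq0 subr_eq0.
  case/andP => _ /eqP /esym zL.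
  have zU : L.-unity_root z by rewrite unity_rootE zL.
  have [m Hm mL] := prim_order_exists L0 zL.
  by exists m.
move=> m Hm; have [z Hz] := prim_root_exists R L0.
have [n [Hn nm]] := Hm z (gfun_pole j L0 k (prim_expr_order Hz)).
by rewrite (prim_order_dvd Hz) -(prim_order_dvd Hn).
Qed.

End Level.
Section Span.
Variable R : rcfType.
Local Notation tf := (@FracField.tofrac {poly R}).

Lemma frac_eq (P Q P2 Q2 : {poly R}) : Q != 0 -> Q2 != 0 -> P * Q2 = P2 * Q ->
  tf P / tf Q = tf P2 / tf Q2.
Proof.
move=> Qn Q2n E; apply/eqP; rewrite eqr_div ?tofrac_eq0 //.
by rewrite -!tofracM E.
Qed.

Variables (L : nat).
Hypothesis L0 : (0 < L)%N.

Lemma ratf_gfun k j : (j < L)%N ->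
  ratf (gfun R L k j).1 (gfun R L k j).2 = tf (Np R L j k) / tf (DD R L ^+ k.+1).
Proof.
move=> jL; apply: frac_eq; last exact: Np_feq.
  by apply/eqP => e; have := gfun20 R j L0 k; rewrite e coef0 => /eqP; rewrite eq_sym oner_eq0.
by rewrite expf_neq0 // DD_neq0.
Qed.

Lemma size_bigsum (I : Type) (r : seq I) (F : I -> {poly R}) b :
  (forall i, (size (F i) <= b)%N) -> (size (\sum_(i <- r) F i)%R <= b)%N.
Proof.
move=> H; elim: r => [|x r IH]; first by rewrite big_nil size_poly0.
by rewrite big_cons (leq_trans (size_polyD _ _)) // geq_max H IH.
Qed.

Lemma poly_expand (r : {poly R}) : (size r <= L)%N -> r = \sum_(j < L) r`_j *: 'X^j.
Proof.
move=> sr; rewrite -poly_def; apply/polyP => i; rewrite coef_poly.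
by case: ltnP => // H; rewrite nth_default // (leq_trans sr H).
Qed.

Lemma span K (N : {poly R}) : (size N <= K * L)%N ->
  exists c : nat -> nat -> R,
    tf N / tf (DD R L ^+ K) = \sum_(k < K) \sum_(j < L)
        ratc (c k j) * ratf (gfun R L k j).1 (gfun R L k j).2.
Proof.
elim: K N => [|K IH] N sN.
  exists (fun _ _ => 0); rewrite big_ord0.
  by move: sN; rewrite mul0n leqn0 size_poly_eq0 => /eqP ->; rewrite tofrac0 mul0r.
set D := DD R L.
have Dn : D != 0 by exact: DD_neq0.
set cK : R := (K`! * L ^ K)%:R.
have cKn : cK != 0 by rewrite pnatr_eq0 muln_eq0 negb_or -!lt0n fact_gt0 expn_gt0 L0.
set r := N %% D.
have sr : (size r <= L)%N by have := ltn_modpN0 N Dn; rewrite size_DD.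
set Qj := fun j => (Np R L j K - cK *: 'X^j) %/ D.
have EQ j : (j < L)%N -> Np R L j K = cK *: 'X^j + Qj j * D.
  move=> jL; have [Q EQ] := Np_mod R j L0 K.
  have e : cK *: 'X^j = (K`! * L ^ K)%:R * 'X^j :> {poly R} by rewrite -mul_polyC polyC_natr.
  have dv : D %| Np R L j K - cK *: 'X^j by rewrite EQ e addrAC subrr add0r dvdp_mulIl.
  by rewrite /Qj divpK // addrC subrK.
set cj := fun j => r`_j / cK.
set M := N %/ D - \sum_(j < L) cj j *: Qj j.
have EN : N = \sum_(j < L) cj j *: Np R L j K + M * D.
  rewrite (eq_bigr (fun i : 'I_L => cj i *: (cK *: 'X^i) + (cj i *: Qj i) * D)); last first.
    by move=> i _; rewrite EQ // scalerDr scalerAl.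
  rewrite /M {1}(divp_eq N D) -/r (poly_expand sr).
  have e1 : \sum_(i < L) cj i *: (cK *: 'X^i) = \sum_(j < L) r`_j *: 'X^j.
    by apply: eq_bigr => i _; rewrite scalerA /cj divfK.
  rewrite big_split /= e1 -mulr_suml mulrBl; ring.
have sM : (size M <= K * L)%N.
  have s1 : (size (N - \sum_(j < L) cj j *: Np R L j K)%R <= K.+1 * L)%N.
    rewrite (leq_trans (size_polyD _ _)) // geq_max sN size_polyN.
    apply: size_bigsum => j; rewrite (leq_trans (size_scale_leq _ _)) //.
    exact: Np_size.
  move: s1; rewrite {1}EN addrC addKr.
  have [->|Mn] := eqVneq M 0; first by rewrite size_poly0.
  rewrite size_mul // size_DD // mulSn -subn1; move: (K * L)%N => t; move: (size M) => s; lia.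
have [c Hc] := IH M sM.
exists (fun k j => if k == K then cj j else c k j).
rewrite big_ord_recr /= eqxx.
rewrite (eq_bigr (fun k : 'I_K => \sum_(j < L) ratc (c k j) * ratf (gfun R L k j).1 (gfun R L k j).2)); last first.
  by move=> k _; rewrite ltn_eqF.
rewrite -Hc.
rewrite (eq_bigr (fun j : 'I_L => tf (cj j *: Np R L j K) / tf (D ^+ K.+1))); last first.
  by move=> j _; rewrite ratf_gfun // /ratc -mul_polyC tofracM mulrA.
rewrite -mulr_suml -rmorph_sum /= EN tofracD mulrDl tofracM exprS tofracM.
rewrite addrC; congr (_ + _); rewrite invfM mulrA mulfK // tofrac_eq0; exact: DD_neq0.
Qed.

End Span.
Section Main.
Variable R : rcfType.
Local Notation C := (R[i]).

Lemma prim_lcm (rs : seq C) : (forall z, z \in rs -> exists n, n.-primitive_root z) ->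
  exists m, (0 < m)%N /\ forall z, z \in rs -> exists n, n.-primitive_root z /\ (n %| m)%N.
Proof.
elim: rs => [|x rs IH] H; first by exists 1%N; split => // z; rewrite in_nil.
have [n Hn] := H x (mem_head _ _).
have [m [m0 Hm]] : exists m, (0 < m)%N /\ forall z, z \in rs -> exists n, n.-primitive_root z /\ (n %| m)%N.
  by apply: IH => z zin; apply: H; rewrite in_cons zin orbT.
exists (n * m)%N; split; first by rewrite muln_gt0 m0 (prim_order_gt0 Hn).
move=> z; rewrite in_cons => /orP [/eqP ->|zin].
  by exists n; split => //; rewrite dvdn_mulr.
by have [n' [Hn' d]] := Hm z zin; exists n'; split => //; rewrite dvdn_mull.
Qed.

Lemma prod_dvd (rs : seq C) (P : {poly C}) : (forall z, z \in rs -> root P z) ->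
  \prod_(z <- rs) ('X - z%:P) %| P ^+ size rs.
Proof.
elim: rs => [|x rs IH] H; first by rewrite big_nil dvd1p.
rewrite big_cons /= exprS; apply: dvdp_mul.
  by rewrite dvdp_XsubCl; apply: H; rewrite mem_head.
by apply: IH => z zin; apply: H; rewrite in_cons zin orbT.
Qed.

End Main.

Unset Implicit Arguments.

Theorem mainTheorem8 (R : rcfType) (A B : {poly R}) (L : nat) :
  B.[0] != 0 -> (size A < size B)%N ->
  (forall z : R[i], is_pole A B z -> exists n : nat, n.-primitive_root z) ->
  is_level A B L ->
  (exists (K : nat) (c : nat -> nat -> R),
     ratf A B = \sum_(k < K) \sum_(j < L)
                  ratc (c k j) * ratf (gfun R L k j).1 (gfun R L k j).2) /\
  (forall k j : nat, (j < L)%N ->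
     Up_eigenfunction L.+1 (gfun R L k j).1 (gfun R L k j).2 /\
     is_level (gfun R L k j).1 (gfun R L k j).2 L).
Proof.
move=> B0 sAB Hroot [Hl1 Hl2].
have Bn : B != 0 by apply/eqP => e; move: B0; rewrite e horner0 eqxx.
set g := gcdp A B.
have gn : g != 0 by rewrite gcdp_eq0 negb_and Bn orbT.
have eB : (B %/ g) * g = B by rewrite divpK // dvdp_gcdr.
have eA : (A %/ g) * g = A by rewrite divpK // dvdp_gcdl.
move: eA eB; set B' := B %/ g; set A' := A %/ g => eA eB.
have B'n : B' != 0 by apply/eqP => e; move: Bn; rewrite -eB e mul0r eqxx.
have [rs Ers] := closed_field_poly_normal (cpoly B').
have lcn : lead_coef (cpoly B') != 0 by rewrite lead_coef_eq0 cpoly_eq0.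
have pole_in z : is_pole A B z <-> z \in rs.
  by rewrite /is_pole -/g -/B' Ers rootZ // root_prod_XsubC.
have L0 : (0 < L)%N.
  have [m [m0 Hm]] := prim_lcm (fun z zin => Hroot z (proj2 (pole_in z) zin)).
  have := Hl2 m (fun z hz => Hm z (proj1 (pole_in z) hz)).
  rewrite lt0n; apply: contraTneq => ->; by rewrite dvd0n -lt0n m0.
split; last first.
  by move=> k j jL; split; [apply: eigen_gfun | apply: gfun_level].

set K := size rs.
have dv : B' %| DD R L ^+ K.
  have : cpoly B' %| cpoly (DD R L ^+ K).
    rewrite Ers dvdpZl // cpolyX cpolyDD; apply: prod_dvd => z zin.
    have [n [Hn nL]] := Hl1 z (proj2 (pole_in z) zin).
    have zL : z ^+ L = 1 by apply/eqP; rewrite -(prim_order_dvd Hn).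
    by rewrite rootE !hornerE zL subrr.
  by rewrite /cpoly dvdp_map.
have DKn : DD R L ^+ K != 0 by rewrite expf_neq0 // DD_neq0.
have eE : (DD R L ^+ K %/ B') * B' = DD R L ^+ K by rewrite divpK.
move: eE; set E := DD R L ^+ K %/ B' => eE.
have En : E != 0 by apply/eqP => e; move: DKn; rewrite -eE e mul0r eqxx.
set N := A' * E.
have sN : (size N <= K * L)%N.
  have [A'0|A'n] := eqVneq A' 0; first by rewrite /N A'0 mul0r size_poly0.
  have sA : size A = (size A' + size g).-1 by rewrite -eA size_mul.
  have sB : size B = (size B' + size g).-1 by rewrite -eB size_mul.
  have sD : size (DD R L ^+ K) = (size E + size B').-1 by rewrite -eE size_mul.
  have sD2 := size_exp (DD R L) K.
  rewrite size_DD // /= in sD2.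
  have sNe : size N = (size A' + size E).-1 by rewrite size_mul.
  have p1 : (0 < size A')%N by rewrite size_poly_gt0.
  have p2 : (0 < size E)%N by rewrite size_poly_gt0.
  have p3 : (0 < size B')%N by rewrite size_poly_gt0.
  have p4 : (0 < size g)%N by rewrite size_poly_gt0.
  rewrite sNe; move: sA sB sD sD2 sAB p1 p2 p3 p4; rewrite mulnC.
  move: (size A) (size B) (size A') (size B') (size E) (size g) (size (DD R L ^+ K)) (K * L)%N.
  move=> a b a' b' e g' d t; rewrite -!subn1; lia.
have [c Hc] := span L0 sN.
exists K, c; rewrite -Hc /ratf; apply: frac_eq => //.
by rewrite -eA -eB /N -eE; ring.
Qed.
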